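(* Let $K\geq 1$ be an integer and let $A$ be a real $m\times n$ matrix (with $K+1\leq n$) whose restricted isometry constant of order $K+1$ satisfies $\delta_{K+1}=\frac{1}{\sqrt{K}+1}$. Then the OMP algorithm perfectly recovers every $K$-sparse signal $x\in\mathbb{R}^n$ from $y=Ax$ in $K$ iterations.
   Context: A vector $x\in\mathbb{R}^n$ is $k$-sparse if $|\mathrm{supp}(x)|\leq k$, where $\mathrm{supp}(x)=\{i: x_i\neq 0\}$. For an $m\times n$ real matrix $A$ and an integer $1\leq k\leq n$, the restricted isometry constant $\delta_k$ is the smallest constant such that $(1-\delta_k)\|x\|_2^2\leq\|Ax\|_2^2\leq(1+\delta_k)\|x\|_2^2$ for all $k$-sparse $x\in\mathbb{R}^n$. For $T\subseteq\{1,\dots,n\}$, $A_T$ denotes the submatrix of $A$ consisting of the columns indexed by $T$, and $A_j$ denotes the $j$-th column of $A$. The OMP (orthogonal matching pursuit) algorithm with input $y$, $A$ and sparsity $K$: set $k=0$, $r^0=y$, $T^0=\emptyset$; while $k<K$: $k\leftarrow k+1$; $t^k=\arg\max_j|\langle r^{k-1},A_j\rangle|$; $T^k=T^{k-1}\cup\{t^k\}$; $\hat x_{T^k}=\arg\min_{z}\|y-A_{T^k}z\|_2$; $r^k=y-A_{T^k}\hat x_{T^k}$. Output $\hat x=\arg\min_{z:\,\mathrm{supp}(z)=T^K}\|y-Az\|_2$. Perfect recovery in $K$ iterations means that in each of the $K$ iterations OMP selects an index of $\mathrm{supp}(x)$ and the output satisfies $\hat x=x$. *)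

(* Defs.v *)
From mathcomp Require Import all_boot all_order all_algebra.
From mathcomp Require Import reals.
Set Implicit Arguments. Unset Strict Implicit. Unset Printing Implicit Defensive.
Import Order.TTheory GRing.Theory Num.Theory.
Local Open Scope ring_scope.

Section Defs.
Variable R : realType.

Definition supp n (x : 'cV[R]_n) : {set 'I_n} := [set i | x i 0 != 0].

Definition sparse n (k : nat) (x : 'cV[R]_n) : Prop := (#|supp x| <= k)%N.

Definition sqnorm n (x : 'cV[R]_n) : R := \sum_(i < n) x i 0 ^+ 2.

Definition colinner m n (A : 'M[R]_(m, n)) (r : 'cV[R]_m) (j : 'I_n) : R :=
  \sum_(i < m) r i 0 * A i j.

Definition RIP_bound m n (A : 'M[R]_(m, n)) (k : nat) (d : R) : Prop :=
  forall x : 'cV[R]_n, sparse k x ->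
    (1 - d) * sqnorm x <= sqnorm (A *m x) /\ sqnorm (A *m x) <= (1 + d) * sqnorm x.

Definition is_RIC m n (A : 'M[R]_(m, n)) (k : nat) (delta : R) : Prop :=
  RIP_bound A k delta /\ (forall d, RIP_bound A k d -> delta <= d).

Definition selected n (t : nat -> 'I_n) (k : nat) : {set 'I_n} :=
  [set j | [exists i : 'I_k, t i.+1 == j]].

Definition is_LS m n (A : 'M[R]_(m, n)) (y : 'cV[R]_m) (T : {set 'I_n}) (z : 'cV[R]_n) : Prop :=
  supp z \subset T /\
  forall w : 'cV[R]_n, supp w \subset T -> sqnorm (y - A *m z) <= sqnorm (y - A *m w).

(* (t, r) is a valid run of K iterations of OMP on input y, A
   (any tie-breaking choice for the argmax is allowed):
   r 0 = y, t k is an argmax of |<r^{k-1}, A_j>|, and r k = y - A xhat where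
   xhat is a least-squares solution supported on T^k. *)
Definition OMP_run m n (A : 'M[R]_(m, n)) (y : 'cV[R]_m) (K : nat)
    (t : nat -> 'I_n) (r : nat -> 'cV[R]_m) : Prop :=
  r 0%N = y /\
  forall k, (1 <= k <= K)%N ->
    (forall j, `|colinner A (r k.-1) j| <= `|colinner A (r k.-1) (t k)|) /\
    exists xh : 'cV[R]_n, is_LS A y (selected t k) xh /\ r k = y - A *m xh.

End Defs.

(* Main.v *)
Require Import Defs.
From mathcomp Require Import all_boot all_order all_algebra.
From mathcomp Require Import reals ring lra.
Import Order.TTheory GRing.Theory Num.Theory.
Local Open Scope ring_scope.
Set Implicit Arguments. Unset Strict Implicit. Unset Printing Implicit Defensive.

Lemma quad_lin0 (R : realFieldType) (p q : R) :
  (forall e : R, 0 <= e * p + e ^+ 2 * q) -> p = 0.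
Proof.
move=> H; apply/eqP; apply/negPn/negP => hp.
have hq : 0 < `|q| + 1 by rewrite ltr_pwDr ?normr_ge0.
have := H (- p / (`|q| + 1)).
have hp2 : 0 < p ^+ 2 by rewrite exprn_even_gt0.
have e1 : - p / (`|q| + 1) * p = - p ^+ 2 / (`|q| + 1).
  by rewrite expr2; field; rewrite gt_eqF.
have e2 : (- p / (`|q| + 1)) ^+ 2 * q = p ^+ 2 / (`|q| + 1) * (q / (`|q| + 1)).
  by field; rewrite gt_eqF.
rewrite e1 e2.
have hqq : q / (`|q| + 1) < 1.
  rewrite ltr_pdivrMr // mul1r; have := real_ler_norm (num_real q); lra.
set u := p ^+ 2 / (`|q| + 1).
have hu : 0 < u by rewrite /u divr_gt0.
set v := q / (`|q| + 1) in hqq *. rewrite mulNr -/u. move=> h. have : u * (1 - v) > 0 by rewrite mulr_gt0 // subr_gt0. rewrite mulrBr mulr1. lra.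
Qed.

Lemma scal (R : realFieldType) (s d a b c al : R) :
  0 < s -> d = 1 / (s + 1) -> 0 < a ->
  (forall e, (1 - d) * (a + e ^+ 2) <= c + 2 * e * b + e ^+ 2 * al) ->
  (forall e, c + 2 * e * b + e ^+ 2 * al <= (1 + d) * (a + e ^+ 2)) ->
  2 * c * (s * d) <= (s * d) ^+ 2 * a + s ^+ 2 * b ^+ 2 -> False.
Proof.
move=> hs hd ha lo up hc.
have hs1 : s + 1 != 0 by rewrite gt_eqF // ltr_wpDr // ltW.
have hd0 : 0 < d by rewrite hd divr_gt0 // ltr_wpDl // ltW.
have hl : 1 - d = s * d by rewrite hd; field.
have hl0 : 0 < s * d by rewrite mulr_gt0.
have h0 := lo 0.
rewrite expr0n /= !(mulr0, mul0r, addr0) in h0.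
have [ceq | cne] := eqVneq c ((1 - d) * a).
  have b0 : 2 * b = 0.
    apply: (@quad_lin0 _ _ (al - (1 - d))) => e.
    have := lo e; rewrite ceq; nra.
  have : 0 < (s * d) ^+ 2 * a by rewrite mulr_gt0 // exprn_gt0.
  move: hc; rewrite ceq hl; nra.
have hlt : (1 - d) * a < c by rewrite lt_neqAle eq_sym cne h0.
pose e := b / d.
have he : e * d = b by rewrite /e divfK // gt_eqF.
have U := up e; have L := lo (- e).
have h4 : 4 * (e * b) <= 2 * d * a + 2 * d * e ^+ 2.
  move: U L; rewrite sqrrN; lra.
have hb : b ^+ 2 <= d ^+ 2 * a.
  have := ler_wpM2l (ltW hd0) h4; rewrite -he; nra.
have : s ^+ 2 * b ^+ 2 <= s ^+ 2 * (d ^+ 2 * a).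
  by rewrite ler_wpM2l // exprn_ge0 // ltW.
move: hlt; rewrite hl => hlt h5.
have : 2 * c * (s * d) <= 2 * (s * d) ^+ 2 * a by move: hc h5; rewrite exprMn; lra.
have : (s * d) * ((s * d) * a) < (s * d) * c by rewrite ltr_pM2l.
nra.
Qed.
Definition inner (R : realType) n (u v : 'cV[R]_n) : R := \sum_(i < n) u i 0 * v i 0.

Lemma sqnormD (R : realType) n (u v : 'cV[R]_n) (e : R) :
  sqnorm (u + e *: v) = sqnorm u + 2 * e * inner u v + e ^+ 2 * sqnorm v.
Proof.
rewrite /sqnorm /inner !mulr_sumr -!big_split /=; apply: eq_bigr => i _.
rewrite !mxE; ring.
Qed.

Lemma sqnorm_ge0 (R : realType) n (u : 'cV[R]_n) : 0 <= sqnorm u.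
Proof. by apply: sumr_ge0 => i _; rewrite sqr_ge0. Qed.

Lemma sqnorm_le0 (R : realType) n (u : 'cV[R]_n) : sqnorm u <= 0 -> u = 0.
Proof.
move=> h; have h0 : sqnorm u = 0 by apply/eqP; rewrite eq_le h sqnorm_ge0.
apply/matrixP => i j; rewrite (ord1 j) mxE.
have := @psumr_eq0P _ _ _ _ (fun i _ => sqr_ge0 (u i 0)) h0 i isT.
by move/eqP; rewrite sqrf_eq0 => /eqP.
Qed.

Lemma inner_delta (R : realType) n (u : 'cV[R]_n) j : inner u (delta_mx j 0) = u j 0.
Proof.
rewrite /inner (bigD1 j) //= big1 ?addr0 => [|i hij]; rewrite mxE.
  by rewrite !eqxx mulr1.
by rewrite (negbTE hij) mulr0.
Qed.

Lemma sqnorm_delta (R : realType) n (j : 'I_n) : sqnorm (delta_mx j 0 : 'cV[R]_n) = 1.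
Proof.
rewrite /sqnorm (bigD1 j) //= big1 ?addr0 => [|i hij]; rewrite mxE.
  by rewrite !eqxx /= expr1n.
by rewrite (negbTE hij) /= expr0n.
Qed.

Lemma colinnerE (R : realType) m n (A : 'M[R]_(m, n)) r j :
  colinner A r j = inner r (A *m delta_mx j 0).
Proof. by rewrite -colE /colinner /inner; apply: eq_bigr => i _; rewrite mxE. Qed.

Lemma sqnorm_Az (R : realType) m n (A : 'M[R]_(m, n)) (z : 'cV[R]_n) :
  sqnorm (A *m z) = \sum_(i < n) z i 0 * colinner A (A *m z) i.
Proof.
rewrite /sqnorm /colinner.
under eq_bigr do rewrite expr2 {2}mxE mulr_sumr.
rewrite exchange_big /=; apply: eq_bigr => i _; rewrite mulr_sumr.
by apply: eq_bigr => l _; ring.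
Qed.

Lemma in_supp (R : realType) n (x : 'cV[R]_n) i : (i \in supp x) = (x i 0 != 0).
Proof. by rewrite inE. Qed.

Lemma supp_sub_zero (R : realType) n (z : 'cV[R]_n) (S : {set 'I_n}) i :
  supp z \subset S -> i \notin S -> z i 0 = 0.
Proof.
move=> hz hi; apply/eqP; apply: contraNT hi => h.
by apply: (subsetP hz); rewrite inE.
Qed.

Lemma pert (R : realType) m n (A : 'M[R]_(m, n)) K (S : {set 'I_n}) (z : 'cV[R]_n) j (e : R) :
  (#|S| <= K)%N -> supp z \subset S -> j \notin S ->
  let v := z + e *: delta_mx j 0 in
  [/\ sparse K.+1 v, sqnorm v = sqnorm z + e ^+ 2 &
      sqnorm (A *m v) = sqnorm (A *m z) + 2 * e * colinner A (A *m z) j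
                          + e ^+ 2 * sqnorm (A *m delta_mx j 0)].
Proof.
move=> hS hz hj v; split.
- rewrite /sparse; apply: (@leq_trans #|j |: S|).
    apply: subset_leq_card; apply/subsetP => i; rewrite inE mxE => h.
    rewrite !inE; have [hij|hij] := eqVneq i j; first by [].
    rewrite /=; apply: (subsetP hz); rewrite inE.
    by move: h; rewrite !mxE (negbTE hij) andFb mulr0 addr0.
  by rewrite cardsU1 hj.
- by rewrite /v sqnormD inner_delta (supp_sub_zero hz hj) sqnorm_delta mulr0 addr0 mulr1.
- by rewrite /v mulmxDr -scalemxAr sqnormD colinnerE.
Qed.

Lemma cbound (R : realType) m n (A : 'M[R]_(m, n)) K (S : {set 'I_n}) (z : 'cV[R]_n) (b lam : R) :
  (#|S| <= K)%N -> supp z \subset S -> 0 <= lam ->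
  (forall i, i \in S -> `|colinner A (A *m z) i| <= `|b|) ->
  2 * sqnorm (A *m z) * lam <= lam ^+ 2 * sqnorm z + K%:R * b ^+ 2.
Proof.
move=> hS hz hl hmax.
rewrite sqnorm_Az mulr_sumr mulr_suml /sqnorm mulr_sumr.
apply: (@le_trans _ _ (\sum_(i < n) (lam ^+ 2 * z i 0 ^+ 2 + (if i \in S then b ^+ 2 else 0)))).
  apply: ler_sum => i _.
  case: ifP => hi.
    have := hmax i hi; rewrite -(real_normK (num_real b)).
    set g := colinner _ _ _ => hg.
    have : g ^+ 2 <= `|b| ^+ 2.
      by rewrite -(real_normK (num_real g)); have := normr_ge0 g; nra.
    have := sqr_ge0 (lam * z i 0 - g); nra.
  by rewrite (supp_sub_zero hz (negbT hi)) !(mulr0, mul0r, addr0) expr0n /= mulr0.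
rewrite big_split /= -big_mkcond sumr_const lerD2l -[b ^+ 2 *+ #|S|]mulr_natl.
by apply: ler_wpM2r; [exact: sqr_ge0 | rewrite ler_nat].
Qed.

Lemma step (R : realType) m n (A : 'M[R]_(m, n)) K (s : R) (S : {set 'I_n}) (z : 'cV[R]_n) j :
  0 < s -> s ^+ 2 = K%:R -> RIP_bound A K.+1 (1 / (s + 1)) ->
  (#|S| <= K)%N -> supp z \subset S -> z != 0 -> j \notin S ->
  (forall i, i \in S -> `|colinner A (A *m z) i| <= `|colinner A (A *m z) j|) -> False.
Proof.
move=> hs hsK hR hS hz hz0 hj hmax.
have hd0 : 0 < 1 / (s + 1) by rewrite divr_gt0 // ltr_wpDl // ltW.
apply: (@scal R s (1 / (s + 1)) (sqnorm z) (colinner A (A *m z) j) (sqnorm (A *m z))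
          (sqnorm (A *m delta_mx j 0)) hs erefl).
- rewrite lt_def sqnorm_ge0 andbT; apply/eqP => h; move/eqP: hz0; apply.
  by apply: sqnorm_le0; rewrite h.
- move=> e; have [hsp hn hA] := pert A e hS hz hj.
  by have [h1 _] := hR _ hsp; rewrite hn hA in h1.
- move=> e; have [hsp hn hA] := pert A e hS hz hj.
  by have [_ h1] := hR _ hsp; rewrite hn hA in h1.
- rewrite hsK; apply: (@cbound _ _ _ _ _ S) => //; exact: mulr_ge0 (ltW hs) (ltW hd0).
Qed.

Lemma posg (R : realType) m n (A : 'M[R]_(m, n)) K (s : R) (S : {set 'I_n}) (z : 'cV[R]_n) :
  0 < s -> RIP_bound A K.+1 (1 / (s + 1)) ->
  (#|S| <= K)%N -> supp z \subset S -> z != 0 ->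
  exists2 i, i \in S & colinner A (A *m z) i != 0.
Proof.
move=> hs hR hS hz hz0.
have hd1 : 0 < 1 - 1 / (s + 1).
  rewrite subr_gt0 ltr_pdivrMr ?mul1r ?ltr_pwDl //; by rewrite ltr_wpDl // ltW.
have ha : 0 < sqnorm z.
  rewrite lt_def sqnorm_ge0 andbT; apply/eqP => h; move/eqP: hz0; apply.
  by apply: sqnorm_le0; rewrite h.
have hsp : sparse K.+1 z.
  by rewrite /sparse (leq_trans (subset_leq_card hz)) // (leq_trans hS).
have [h1 _] := hR _ hsp.
case: (pickP [pred i | (i \in S) && (colinner A (A *m z) i != 0)]) => [i /andP[hi hg]|h0].
  by exists i.
have : sqnorm (A *m z) = 0.
  rewrite sqnorm_Az big1 // => i _.
  have := h0 i; rewrite /= => /negbT; rewrite negb_and negbK => /orP[hi|/eqP ->].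
    by rewrite (supp_sub_zero hz hi) mul0r.
  by rewrite mulr0.
move=> h2; rewrite h2 in h1.
have : 0 < (1 - 1 / (s + 1)) * sqnorm z by rewrite mulr_gt0.
by rewrite ltNge h1.
Qed.

Lemma selected0 n (t : nat -> 'I_n) : selected t 0 = set0.
Proof. by apply/setP => j; rewrite !inE; apply/existsP => -[[]]. Qed.

Lemma selectedS n (t : nat -> 'I_n) k : selected t k.+1 = t k.+1 |: selected t k.
Proof.
apply/setP => j; rewrite !inE.
apply/existsP/orP => [[i hi]|[hj|/existsP[i hi]]].
- case: (ltnP i k) => hik.
    by right; apply/existsP; exists (Ordinal hik).
  left; have e : nat_of_ord i = k by apply/eqP; rewrite eqn_leq hik -ltnS ltn_ord.
  by move: hi; rewrite e eq_sym.
- by exists ord_max; rewrite /= eq_sym.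
- by exists (widen_ord (leqnSn k) i).
Qed.

Lemma card_selected n (t : nat -> 'I_n) k : (#|selected t k| <= k)%N.
Proof.
elim: k => [|k IH]; first by rewrite selected0 cards0.
by rewrite selectedS cardsU1 (leq_add (leq_b1 _) IH).
Qed.

Lemma selected_sub n (t : nat -> 'I_n) k (S : {set 'I_n}) :
  (forall i, (1 <= i <= k)%N -> t i \in S) -> selected t k \subset S.
Proof.
move=> h; apply/subsetP => j; rewrite inE => /existsP[i /eqP <-].
by apply: h; rewrite /= ltn_ord.
Qed.

Lemma mem_selected n (t : nat -> 'I_n) k i : (1 <= i <= k)%N -> t i \in selected t k.
Proof.
case/andP => h1 h2; rewrite inE; apply/existsP.
have hi : (i.-1 < k)%N by rewrite prednK.
by exists (Ordinal hi); rewrite /= prednK.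
Qed.

Lemma selected_mono n (t : nat -> 'I_n) k k' : (k <= k')%N -> selected t k \subset selected t k'.
Proof.
move=> hk; apply/subsetP => j; rewrite inE => /existsP[i /eqP <-].
by apply: mem_selected; rewrite /= (leq_trans (ltn_ord i)).
Qed.

Lemma normal_eq (R : realType) m n (A : 'M[R]_(m, n)) y T (xh : 'cV[R]_n) i :
  is_LS A y T xh -> i \in T -> colinner A (y - A *m xh) i = 0.
Proof.
move=> [hs hmin] hi.
have : 2 * colinner A (y - A *m xh) i = 0.
  apply: (@quad_lin0 _ _ (sqnorm (A *m delta_mx i 0))) => e.
  have hw : supp (xh - e *: delta_mx i 0) \subset T.
    apply/subsetP => j; rewrite inE !mxE.
    have [->|hij] := eqVneq j i; first by [].
    rewrite /= mulr0 subr0 => h.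
    by apply: (subsetP hs); rewrite inE.
  have := hmin _ hw.
  have -> : y - A *m (xh - e *: delta_mx i 0) = (y - A *m xh) + e *: (A *m delta_mx i 0).
    by rewrite mulmxBr -scalemxAr opprB addrCA addrC.
  rewrite sqnormD colinnerE; lra.
by move/eqP; rewrite mulf_eq0 pnatr_eq0 /= => /eqP.
Qed.

Lemma supp_sub (R : realType) n (u w : 'cV[R]_n) (T : {set 'I_n}) :
  supp u \subset T -> supp w \subset T -> supp (u - w) \subset T.
Proof.
move=> hu hw; apply/subsetP => i; rewrite inE !mxE => h.
case: (boolP (i \in T)) => // hi.
by move: h; rewrite (supp_sub_zero hu hi) (supp_sub_zero hw hi) subrr eqxx.
Qed.

Lemma sqnorm0 (R : realType) n : sqnorm (0 : 'cV[R]_n) = 0.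
Proof. by rewrite /sqnorm big1 // => i _; rewrite mxE expr0n. Qed.

Unset Implicit Arguments.

Theorem theorem2 (R : realType) (m n K : nat) (A : 'M[R]_(m, n))
  (hK : (1 <= K)%N) (hn : (K.+1 <= n)%N)
  (hdelta : is_RIC A K.+1 (1 / (Num.sqrt (K%:R : R) + 1))) :
  forall x : 'cV[R]_n, sparse K x ->
  forall (t : nat -> 'I_n) (r : nat -> 'cV[R]_m),
    OMP_run A (A *m x) K t r ->
    (forall k, (1 <= k <= K)%N -> (k <= #|supp x|)%N -> t k \in supp x) /\
    (forall xh : 'cV[R]_n, is_LS A (A *m x) (selected t K) xh -> xh = x).
Proof.
move=> x hx t r [hr0 hrun].
set s := Num.sqrt (K%:R : R).
have hs : 0 < s by rewrite sqrtr_gt0 ltr0n.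
have hsK : s ^+ 2 = K%:R by rewrite sqr_sqrtr // ler0n.
have hR : RIP_bound A K.+1 (1 / (s + 1)) := hdelta.1.
set S := supp x.
have hxS : supp x \subset S := subxx _.
have res : forall k, (k <= K)%N -> exists xh : 'cV[R]_n,
    [/\ supp xh \subset selected t k, r k = A *m (x - xh) &
        forall i, i \in selected t k -> colinner A (r k) i = 0].
  case=> [_|k hk].
    exists 0; split.
    - by apply/subsetP => i; rewrite inE mxE eqxx.
    - by rewrite subr0 hr0.
    - by move=> i; rewrite selected0 inE.
  have [_ [xh [hls hrk]]] := hrun k.+1 hk.
  exists xh; split.
  - exact: hls.1.
  - by rewrite hrk mulmxBr.
  - by move=> i hi; rewrite hrk; apply: normal_eq hls hi.
have claim : forall k, (k <= K)%N -> (k <= #|S|)%N ->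
    (forall i, (1 <= i <= k)%N -> t i \in S) /\ #|selected t k| = k.
  elim=> [|k IH] hk hkS.
    split; last by rewrite selected0 cards0.
    by move=> i /andP[h1 h2]; have := leq_trans h1 h2.
  have [IH1 IH2] := IH (ltnW hk) (ltnW hkS).
  have [xh [hsupp hrk hnorm]] := res k (ltnW hk).
  have hsel : selected t k \subset S := selected_sub IH1.
  have hz : supp (x - xh) \subset S := supp_sub hxS (subset_trans hsupp hsel).
  have hz0 : x - xh != 0.
    have /subsetPn[i hiS hisel] : ~~ (S \subset selected t k).
      apply/negP => hsub; have := subset_leq_card hsub.
      by rewrite IH2 leqNgt hkS.
    apply/eqP => h0; have := congr1 (fun M : 'cV[R]_n => M i 0) h0.
    rewrite !mxE (supp_sub_zero hsupp hisel) subr0 => /eqP.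
    by move: hiS; rewrite inE => /negbTE ->.
  have [hmax _] := hrun k.+1 hk.
  rewrite /= hrk in hmax.
  have htS : t k.+1 \in S.
    apply/negPn/negP => hj.
    by apply: (step hs hsK hR hx hz hz0 hj) => i _; exact: hmax i.
  split.
    move=> i /andP[h1 h2]; case: (ltnP i k.+1) => h3.
      by apply: IH1; rewrite h1 -ltnS.
    by have -> : i = k.+1 by apply/eqP; rewrite eqn_leq h2 h3.
  rewrite selectedS cardsU1 IH2.
  suff -> : t k.+1 \notin selected t k by [].
  have [i hi hg] := posg hs hR hx hz hz0.
  apply/negP => hin; have := hnorm _ hin; rewrite hrk => h0.
  have := hmax i; rewrite h0 normr0 normr_le0 => h1.
  by move: hg; rewrite h1.
split.
  move=> k /andP[h1 h2] hks; have [c1 _] := claim k h2 hks.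
  by apply: c1; rewrite h1 leqnn.
move=> xh hls.
have [c1 c2] := claim #|S| hx (leqnn _).
have hSsel : S \subset selected t K.
  have hsub := selected_sub c1.
  have : selected t #|S| == S by rewrite eqEcard hsub c2 leqnn.
  move/eqP => <-; exact: selected_mono.
have [hs' hmin] := hls.
have := hmin x hSsel; rewrite subrr sqnorm0 -mulmxBr => /sqnorm_le0 hA.
have hv : sparse K.+1 (x - xh).
  rewrite /sparse (leq_trans (subset_leq_card (supp_sub hSsel hs'))) //.
  by rewrite (leq_trans (card_selected _ _)).
have [h1 _] := hR _ hv.
rewrite hA sqnorm0 pmulr_rle0 in h1; last first.
  rewrite subr_gt0 ltr_pdivrMr ?mul1r ?ltr_pwDl //; by rewrite ltr_wpDl // ltW.
by apply/esym/subr0_eq; apply: sqnorm_le0.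
Qed.
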